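(* Let $A,A'$ be bounded distributive lattices and $f:A\to A'$ a lattice morphism. Let $\mathcal{L}$ (resp. $\mathcal{L}'$) be the abstract logic with expressions $A$ (resp. $A'$), theories the proper filters of $A$ (resp. $A'$), and connectives $\vee,\wedge,\bot,\top$. Then $f:\mathcal{L}\to\mathcal{L}'$ is a stable logic map.
   Context: An abstract logic is a triple $\mathcal{L}=(Expr_{\mathcal{L}},Th_{\mathcal{L}},\mathcal{C}_{\mathcal{L}})$ where $Expr_{\mathcal{L}}$ is a set, $Th_{\mathcal{L}}$ a non-empty set of subsets of $Expr_{\mathcal{L}}$ (theories) closed under intersections of non-empty subfamilies, and $\mathcal{C}_{\mathcal{L}}$ a set of operations on $Expr_{\mathcal{L}}$. A theory $T$ is prime if $T=\bigcap\mathcal{T}$ for a non-empty finite $\mathcal{T}\subseteq Th_{\mathcal{L}}$ implies $T\in\mathcal{T}$; $PTh_{\mathcal{L}}$ denotes the set of prime theories (for the logic of proper filters of a bounded distributive lattice these are exactly the prime filters). A stable logic map $h:\mathcal{L}\to\mathcal{L}'$ is a function $Expr_{\mathcal{L}}\to Expr_{\mathcal{L}'}$ with $h^{-1}(T')\in Th_{\mathcal{L}}$ for all $T'\in Th_{\mathcal{L}'}$ and $h^{-1}(P')\in PTh_{\mathcal{L}}$ for all $P'\in PTh_{\mathcal{L}'}$. *)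

(* Defs.v *)
From HB Require Import structures.
From mathcomp Require Import all_boot all_order.
From Stdlib Require Import List.
Set Implicit Arguments. Unset Strict Implicit. Unset Printing Implicit Defensive.
Import Order.TTheory.
Local Open Scope order_scope.

Definition pset (E : Type) := E -> Prop.

Definition preim (E E' : Type) (h : E -> E') (S : pset E') : pset E :=
  fun x => S (h x).

Definition bigcap_list (E : Type) (s : list (pset E)) : pset E :=
  fun x => forall U, List.In U s -> U x.

(* Abstract logic: only the set of theories [Th] matters for the notions below.
   Prime theory: T = ⋂𝒯 for a non-empty finite 𝒯 ⊆ Th implies T ∈ 𝒯. *)
Definition prime_theory (E : Type) (Th : pset E -> Prop) (T : pset E) : Prop :=
  Th T /\
  forall s : list (pset E), s <> nil -> (forall U, List.In U s -> Th U) ->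
    T = bigcap_list s -> List.In T s.

Definition stable_logic_map (E E' : Type) (Th : pset E -> Prop)
  (Th' : pset E' -> Prop) (h : E -> E') : Prop :=
  (forall T', Th' T' -> Th (preim h T')) /\
  (forall P', prime_theory Th' P' -> prime_theory Th (preim h P')).

Definition proper_filter (d : Order.disp_t) (A : tbLatticeType d) (F : pset A) : Prop :=
  [/\ F \top,
      (forall x y : A, F x -> x <= y -> F y),
      (forall x y : A, F x -> F y -> F (x `&` y)) &
      ~ (forall x : A, F x)].

Definition bounded_lattice_morphism (d d' : Order.disp_t)
  (A : tbLatticeType d) (A' : tbLatticeType d') (f : A -> A') : Prop :=
  [/\ (forall x y, f (x `&` y) = f x `&` f y),
      (forall x y, f (x `|` y) = f x `|` f y),
      f \bot = \bot & f \top = \top].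

(* Main.v *)
Require Import Defs.
From mathcomp Require Import all_boot all_order.
From Stdlib Require Import List Classical FunctionalExtensionality PropExtensionality.
Import Order.TTheory.
Local Open Scope order_scope.
Set Implicit Arguments. Unset Strict Implicit.

Lemma pset_ext (E : Type) (U V : pset E) : (forall x, U x <-> V x) -> U = V.
Proof.
move=> H; apply: functional_extensionality => x; apply: propositional_extensionality; exact: H.
Qed.

Definition join_prime d (A : tbDistrLatticeType d) (Q : pset A) :=
  forall x y : A, Q (x `|` y) -> Q x \/ Q y.

Lemma key d (A : tbDistrLatticeType d) (Q : pset A) : join_prime Q ->
  forall s : list (pset A),
  (forall U, In U s -> forall x y : A, U x -> x <= y -> U y) ->
  (forall x, (forall U, In U s -> U x) -> Q x) -> s <> nil ->
  exists U, In U s /\ forall x, U x -> Q x.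
Proof.
move=> JP; elim=> [|U s IH] // Hup Hcap _.
case: (classic (forall x, U x -> Q x)) => [HU|HU].
  by exists U; split => //; left.
have [x [Ux nQx]] : exists x, U x /\ ~ Q x.
  apply: NNPP => H; apply: HU => z Uz; apply: NNPP => nQ; apply: H; by exists z.
case: s IH Hup Hcap => [|V s] IH Hup Hcap.
  exfalso; apply: nQx; apply: Hcap => W [<-|[]] //.
have [W [HW HWQ]] : exists W, In W (V :: s) /\ forall x, W x -> Q x.
  apply: IH => //.
  - by move=> W HW; apply: Hup; right.
  - move=> y Hy.
    have : Q (x `|` y).
      apply: Hcap => W [<-|HW].
        by apply: (Hup U (or_introl erefl) x) => //; exact: leUl.
      by apply: (Hup W (or_intror HW) y); [apply: Hy|exact: leUr].
    by case/JP.
by exists W; split => //; right.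
Qed.

Lemma prime_of_jp d (A : tbDistrLatticeType d) (Q : pset A) :
  proper_filter Q -> join_prime Q -> prime_theory (@proper_filter d A) Q.
Proof.
move=> PF JP; split => // s sn Hs Heq.
have [U [HU HUQ]] : exists U, In U s /\ forall x, U x -> Q x.
  apply: (key JP) => //.
  - by move=> U HU; case: (Hs U HU).
  - by move=> x Hx; rewrite Heq.
have -> : Q = U => //.
apply: pset_ext => x; split; last exact: HUQ.
by rewrite Heq => H; apply: H.
Qed.

Lemma jp_of_prime d (A : tbDistrLatticeType d) (P : pset A) :
  prime_theory (@proper_filter d A) P -> join_prime P.
Proof.
move=> [[Ptop Pup Pmeet Pprop] Hpr] x y Pxy.
apply: NNPP => H.
have nPx : ~ P x by move=> ?; apply: H; left.
have nPy : ~ P y by move=> ?; apply: H; right.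
pose F (a : A) : pset A := fun z => exists p, P p /\ p `&` a <= z.
have Fup a : forall u v, F a u -> u <= v -> F a v.
  by move=> u v [p [Pp le]] uv; exists p; split => //; exact: le_trans uv.
have Fmeet a : forall u v, F a u -> F a v -> F a (u `&` v).
  move=> u v [p [Pp lp]] [q [Pq lq]]; exists (p `&` q); split; first exact: Pmeet.
  rewrite lexI; apply/andP; split.
    apply: le_trans lp; apply: leI2 => //; exact: leIl.
  apply: le_trans lq; apply: leI2 => //; exact: leIr.
have Fa a : F a a by exists \top; split => //; exact: leIr.
have PF a z : P z -> F a z by move=> Pz; exists z; split => //; exact: leIl.
have cap : forall z, F x z -> F y z -> P z.
  move=> z [p [Pp lp]] [q [Pq lq]].
  apply: (Pup ((p `&` q) `&` (x `|` y))); first by apply: (Pmeet) => //; exact: (Pmeet).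
  rewrite meetUr leUx; apply/andP; split.
    apply: le_trans lp; apply: leI2 => //; exact: leIl.
  apply: le_trans lq; apply: leI2 => //; exact: leIr.
have Ftop a : F a \top by exists \top; split => //; exact: lex1.
have pF : proper_filter (F x).
  split; [exact: Ftop|exact: Fup|exact: Fmeet|].
  by move=> all; apply: nPy; apply: cap; [apply: all|apply: Fa].
have pG : proper_filter (F y).
  split; [exact: Ftop|exact: Fup|exact: Fmeet|].
  by move=> all; apply: nPx; apply: cap; [apply: Fa|apply: all].
have Heq : P = bigcap_list (F x :: F y :: nil).
  apply: pset_ext => z; split.
    by move=> Pz U [<-|[<-|[]]]; apply: PF.
  by move=> Hz; apply: cap; apply: Hz; [left|right;left].
have Hs : forall U, In U (F x :: F y :: nil) -> proper_filter U.
  by move=> U [<-|[<-|[]]].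
case: (Hpr (F x :: F y :: nil) ltac:(by []) Hs Heq) => [Ex|[Ey|[]]].
  by apply: nPx; rewrite -Ex.
by apply: nPy; rewrite -Ey.
Qed.

Theorem lemma3p13 (d d' : Order.disp_t)
  (A : tbDistrLatticeType d) (A' : tbDistrLatticeType d') (f : A -> A') :
  bounded_lattice_morphism f ->
  stable_logic_map (@proper_filter d A) (@proper_filter d' A') f.
Proof.
move=> [fI fU fb ft].
have mono : forall x y : A, x <= y -> f x <= f y.
  move=> x y; rewrite !leEmeet -fI => /eqP ->; exact: eqxx.
have pf : forall T' : pset A', proper_filter T' -> proper_filter (Defs.preim f T').
  move=> T' [Ttop Tup Tmeet Tprop]; split.
  - by rewrite /Defs.preim ft.
  - by move=> x y Hx xy; apply: (Tup (f x)) => //; exact: mono.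
  - by move=> x y Hx Hy; rewrite /Defs.preim fI; exact: Tmeet.
  - move=> all; apply: Tprop => z; apply: (Tup \bot); last exact: le0x.
    by rewrite -fb; apply: all.
split => // P' HP.
apply: prime_of_jp; first by apply: pf; case: HP.
move=> x y; rewrite /Defs.preim fU; exact: (jp_of_prime HP).
Qed.
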